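(* Let $\varphi:(\alpha,\beta)\to\mathbb{R}^n$ with $-\infty\le\alpha<0<\beta\le\infty$. Then $\varphi$ is the coordinate projection of a solution of a Noetherian initial value problem if and only if $\varphi$ is the coordinate projection of a solution of a polynomial initial value problem.
   Context: A Noetherian chain is a sequence of real analytic functions $h_1,\dots,h_r:H\to\mathbb{R}$ on an open connected set $H\subseteq\mathbb{R}^k$ such that for all $i\le k$, $j\le r$ there is a polynomial $q_{ij}\in\mathbb{R}[y_1,\dots,y_k,z_1,\dots,z_r]$ with $\frac{\partial h_j}{\partial y_i}(y)=q_{ij}(y,h_1(y),\dots,h_r(y))$ on $H$. A function $h:H\to\mathbb{R}$ is Noetherian if $h(y)=p(y,h_1(y),\dots,h_r(y))$ for some polynomial $p$ with real coefficients and some Noetherian chain $h_1,\dots,h_r$ on $H$. An initial value problem (IVP) of dimension $m$ is given by a map $F:D\to\mathbb{R}^m$ on an open connected domain $D\subseteq\mathbb{R}^m$ and an initial value $X_0\in D$; it is Noetherian if every component of $F$ is a Noetherian function on $D$, and polynomial if $D=\mathbb{R}^m$ and every component of $F$ is a polynomial. A solution on $(\alpha,\beta)$ is a differentiable $\psi:(\alpha,\beta)\to D$ with $\psi(0)=X_0$ and $\psi'(t)=F(\psi(t))$ for all $t$. We say $\varphi:(\alpha,\beta)\to\mathbb{R}^n$ is the coordinate projection of a solution of an IVP of dimension $m\ge n$ if there is a solution $\psi$ on $(\alpha,\beta)$ of that IVP whose first $n$ coordinates equal $\varphi$. *)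

(* Defs.v *)
From HB Require Import structures.
From mathcomp Require Import all_boot all_order all_algebra.
From mathcomp Require Import all_classical all_reals all_analysis.
From mathcomp Require mpoly.
Set Implicit Arguments. Unset Strict Implicit. Unset Printing Implicit Defensive.
Import Order.TTheory GRing.Theory Num.Theory.
Import numFieldNormedType.Exports.
Local Open Scope classical_set_scope.
Local Open Scope ring_scope.

Section Defs.
Variable R : realType.

Definition rpoly (n : nat) := mpoly.mpoly n R.
Definition peval (n : nat) (p : rpoly n) (v : 'I_n -> R) : R := mpoly.meval v p.

Definition pseries_partial (k : nat) (c : ('I_k -> nat) -> R) (a y : 'rV[R]_k)
  (abs : bool) (N : nat) : R :=
  \sum_(al : {ffun 'I_k -> 'I_N.+1} | (\sum_i (al i : nat) <= N)%N)
     (if abs then `|c (fun i => al i)| * \prod_i `|y 0 i - a 0 i| ^+ al i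
      else c (fun i => al i) * \prod_i (y 0 i - a 0 i) ^+ al i).

Definition analytic_at (k : nat) (f : 'rV[R]_k -> R) (a : 'rV[R]_k) : Prop :=
  exists (c : ('I_k -> nat) -> R) (r : R), 0 < r /\
    forall y : 'rV[R]_k, `|y - a| < r ->
      cvg (pseries_partial c a y true @ \oo) /\
      pseries_partial c a y false @ \oo --> f y.

Definition real_analytic_on (k : nat) (H : set 'rV[R]_k) (f : 'rV[R]_k -> R) :=
  forall a, H a -> analytic_at f a.

Definition evec (k : nat) (i : 'I_k) : 'rV[R]_k := delta_mx 0 i.

Definition ext_point (k r : nat) (h : 'I_r -> 'rV[R]_k -> R) (y : 'rV[R]_k)
  : 'I_(k + r) -> R :=
  fun j => match fintype.split j with inl j' => y 0 j' | inr j' => h j' y end.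

Definition noetherian_chain (k r : nat) (H : set 'rV[R]_k)
  (h : 'I_r -> 'rV[R]_k -> R) : Prop :=
  open H /\ connected H /\
  (forall j, real_analytic_on H (h j)) /\
  forall (i : 'I_k) (j : 'I_r), exists q : rpoly (k + r),
    forall y, H y -> derivable (h j) y (evec i) /\
                     'D_(evec i) (h j) y = peval q (ext_point h y).

Definition noetherian_fun (k : nat) (H : set 'rV[R]_k) (f : 'rV[R]_k -> R) : Prop :=
  exists (r : nat) (h : 'I_r -> 'rV[R]_k -> R) (p : rpoly (k + r)),
    noetherian_chain H h /\ forall y, H y -> f y = peval p (ext_point h y).

Definition noetherian_ivp (m : nat) (D : set 'rV[R]_m)
  (F : 'rV[R]_m -> 'rV[R]_m) (X0 : 'rV[R]_m) : Prop :=
  open D /\ connected D /\ D X0 /\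
  forall l : 'I_m, noetherian_fun D (fun x => F x 0 l).

Definition polynomial_ivp (m : nat) (D : set 'rV[R]_m)
  (F : 'rV[R]_m -> 'rV[R]_m) (X0 : 'rV[R]_m) : Prop :=
  D = setT /\ forall l : 'I_m, exists p : rpoly m,
    forall x, F x 0 l = peval p (fun j => x 0 j).

Definition ivp_solution (m : nat) (D : set 'rV[R]_m)
  (F : 'rV[R]_m -> 'rV[R]_m) (X0 : 'rV[R]_m) (alpha beta : \bar R)
  (psi : R -> 'rV[R]_m) : Prop :=
  psi 0 = X0 /\
  forall t : R, (alpha < t%:E < beta)%E ->
    D (psi t) /\ derivable psi t 1 /\ derive1 psi t = F (psi t).

Definition coord_proj_of (cls : forall m : nat, set 'rV[R]_m ->
      ('rV[R]_m -> 'rV[R]_m) -> 'rV[R]_m -> Prop)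
  (n : nat) (alpha beta : \bar R) (phi : R -> 'rV[R]_n) : Prop :=
  exists (m : nat) (hnm : (n <= m)%N) (D : set 'rV[R]_m)
         (F : 'rV[R]_m -> 'rV[R]_m) (X0 : 'rV[R]_m) (psi : R -> 'rV[R]_m),
    cls m D F X0 /\ ivp_solution D F X0 alpha beta psi /\
    forall t : R, (alpha < t%:E < beta)%E ->
      forall i : 'I_n, psi t 0 (widen_ord hnm i) = phi t 0 i.

End Defs.

(* Main.v *)
Require Import Defs.
From HB Require Import structures.
From mathcomp Require Import all_boot all_order all_algebra.
From mathcomp Require Import all_classical all_reals all_analysis.
From mathcomp Require mpoly.
Import -(notations) mpoly.
Set Implicit Arguments. Unset Strict Implicit. Unset Printing Implicit Defensive.
Import Order.TTheory GRing.Theory Num.Theory.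
Import numFieldNormedType.Exports.
Local Open Scope classical_set_scope.
Local Open Scope ring_scope.

Section Aux.
Variable R : realType.

Lemma mxnorm_entry m n (M : 'M[R]_(m, n)) i j : `|M i j| <= `|M|.
Proof.
rewrite [leRHS]/Num.Def.normr /= mx_normrE.
by apply/bigmax_geP; right; exists (i, j).
Qed.

Lemma mxnorm_le m n (M : 'M[R]_(m, n)) c :
  0 <= c -> (forall i j, `|M i j| <= c) -> `|M| <= c.
Proof.
move=> c0 H; rewrite [leLHS]/Num.Def.normr /= mx_normrE.
by apply: bigmax_le => // -[i j] _; exact: H.
Qed.

Lemma line_derive k (h : 'rV[R]_k -> R) (b : 'rV[R]_k) (e : 'rV[R]_k) (c : R) :
  let f := fun u : R => h (b + u *: e) in
  (derivable f c 1 <-> derivable h (b + c *: e) e) /\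
  'D_1 f c = 'D_e h (b + c *: e).
Proof.
move=> f.
have E : (fun d : R => d^-1 *: ((f \o shift c) (d *: 1) - f c)) =
         (fun d : R => d^-1 *: ((h \o shift (b + c *: e)) (d *: e) - h (b + c *: e))).
  apply/funext => d /=; rewrite /f /=.
  by rewrite -[d%:A]/(d * 1) mulr1 scalerDl addrCA.
by rewrite /derivable /derive E.
Qed.

Lemma mvt_gen (f : R -> R) (d : R) :
  (forall u, `|u| <= `|d| -> derivable f u 1) ->
  exists c, `|c| <= `|d| /\ f d - f 0 = 'D_1 f c * d.
Proof.
move=> Hd.
have [d0|d0] := leP 0 d.
  have [c cin E] : exists2 c, c \in `[0, d]%R & f d - f 0 = 'D_1 f c * (d - 0).
    apply: MVT_segment => //.
    - move=> x; rewrite in_itv /= => /andP[x0 xd]; apply: DeriveDef => //.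
      have xd' : `|x| <= `|d| by rewrite (ger0_norm d0) ger0_norm; [exact: ltW | exact: ltW].
      exact: (Hd x xd').
    - apply: derivable_within_continuous => x; rewrite in_itv /= => /andP[x0 xd].
      have xd' : `|x| <= `|d| by rewrite (ger0_norm d0) ger0_norm.
      exact: (Hd x xd').
  exists c; move: cin; rewrite in_itv /= => /andP[c0 cd].
  by rewrite !ger0_norm // E subr0.
have [c cin E] : exists2 c, c \in `[d, 0]%R & f 0 - f d = 'D_1 f c * (0 - d).
  apply: MVT_segment; first exact: ltW.
  - move=> x; rewrite in_itv /= => /andP[x0 xd]; apply: DeriveDef => //.
    have xd' : `|x| <= `|d| by rewrite (ltr0_norm d0) ltr0_norm // ?lerN2; exact: ltW.
    exact: (Hd x xd').
  - apply: derivable_within_continuous => x; rewrite in_itv /= => /andP[x0 xd].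
    have xd' : `|x| <= `|d|.
      by rewrite (ltr0_norm d0) ler_norml opprK x0 /= (le_trans xd) // -oppr_le0 opprK ltW.
    exact: (Hd x xd').
exists c; move: cin; rewrite in_itv /= => /andP[c0 cd].
split.
  by rewrite ler_norml (ltr0_norm d0) opprK c0 /= (le_trans cd) // -oppr_le0 opprK ltW.
by apply/eqP; rewrite -eqr_opp opprB E sub0r mulrN.
Qed.


Lemma telescope_mvt k (h : 'rV[R]_k -> R) (y y' : 'rV[R]_k) :
  (forall z, `|z - y| <= `|y' - y| -> forall i, derivable h z (evec R i)) ->
  exists xi : 'I_k -> 'rV[R]_k, (forall i, `|xi i - y| <= `|y' - y|) /\
    h y' - h y = \sum_i (y' 0 i - y 0 i) * 'D_(evec R i) h (xi i).
Proof.
move=> Hder.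
pose P (p : nat) : 'rV[R]_k := \row_j (if (j < p)%N then y' 0 j else y 0 j).
have P0 : P 0%N = y by apply/rowP => j; rewrite mxE.
have Pk : P k = y' by apply/rowP => j; rewrite mxE ltn_ord.
have Pnorm : forall (i : 'I_k) u, `|u| <= `|y' 0 i - y 0 i| ->
    `|P i + u *: evec R i - y| <= `|y' - y|.
  move=> i u Hu; apply: mxnorm_le => // a j.
  rewrite (ord1 a) !mxE /=.
  have [ji|ji] := ltnP j i.
    rewrite (_ : (j == i) = false); last by apply/negbTE; rewrite neq_ltn ji.
    rewrite mulr0 addr0.
    by have := mxnorm_entry (y' - y) 0 j; rewrite !mxE.
  have [/eqP ji'|ji'] := boolP (j == i).
    rewrite ji' mulr1 addrAC subrr add0r (le_trans Hu) //.
    by have := mxnorm_entry (y' - y) 0 i; rewrite !mxE.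
  by rewrite mulr0 addr0 subrr normr0.
have Pstep : forall i : 'I_k, P i.+1 = P i + (y' 0 i - y 0 i) *: evec R i.
  move=> i; apply/rowP => j; rewrite !mxE /=.
  have [ji|ji] := ltnP j i.
    rewrite ltnS (ltnW ji) (_ : (j == i) = false).
      by rewrite mulr0 addr0.
    by apply/negbTE; rewrite neq_ltn ji.
  have [/eqP ji'|ji'] := boolP (j == i).
    by rewrite ji' ltnSn mulr1 addrC subrK.
  rewrite mulr0 addr0 ltnS; case: ifP => // ij.
  by exfalso; move/eqP: ji'; apply; apply: val_inj; apply/eqP; rewrite /= eqn_leq ij ji.
have step : forall i : 'I_k, exists xi : 'rV[R]_k, `|xi - y| <= `|y' - y| /\
    h (P i.+1) - h (P i) = (y' 0 i - y 0 i) * 'D_(evec R i) h xi.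
  move=> i; set d := y' 0 i - y 0 i.
  pose f := fun u : R => h (P i + u *: evec R i).
  have [c [cd E]] : exists c, `|c| <= `|d| /\ f d - f 0 = 'D_1 f c * d.
    apply: mvt_gen => u ud.
    have [L _] := line_derive h (P i) (evec R i) u.
    by apply/L; apply: Hder; apply: Pnorm.
  exists (P i + c *: evec R i); split; first exact: Pnorm.
  have [_ L] := line_derive h (P i) (evec R i) c.
  by rewrite Pstep -L mulrC -E /f scale0r addr0.
have [xi Hxi] := choice step.
exists xi; split; first by move=> i; case: (Hxi i).
rewrite -{1}Pk -{1}P0 -(telescope_sumr (fun p => h (P p))) // big_mkord.
by apply: eq_bigr => i _; case: (Hxi i).
Qed.


Lemma peval_bound N (p : rpoly R N) (B : R) :
  exists C, forall v, (forall j, `|v j| <= B) -> `|peval p v| <= C.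
Proof.
exists (\sum_(m <- mpoly.msupp p) `|mpoly.mcoeff m p| * \prod_i `|B| ^+ mpoly.fun_of_multinom m i).
move=> v Hv; rewrite /peval mpoly.mevalE.
apply: le_trans (ler_norm_sum _ _ _) _; apply: ler_sum => m _.
rewrite normrM normr_prod; apply: ler_wpM2l => //; apply: ler_prod => i _.
rewrite normrX exprn_ge0 //=; apply: lerXn2r; rewrite ?nnegrE //.
exact: le_trans (Hv i) (ler_norm B).
Qed.

Section cvg_big.
Context {T : Type} {F : set_system T} {FF : Filter F}.

Lemma cvg_bsum (I : Type) (r : seq I) (f : I -> T -> R) (l : I -> R) :
  (forall i, f i x @[x --> F] --> l i) ->
  (\sum_(i <- r) f i x) @[x --> F] --> \sum_(i <- r) l i.
Proof.
move=> H; elim: r => [|a r IH].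
  have -> : (fun x => \sum_(i <- [::]) f i x) = fun=> 0 by apply/funext => x; rewrite big_nil.
  by rewrite big_nil; exact: cvg_cst.
have -> : (fun x => \sum_(i <- a :: r) f i x) = (fun x => f a x + \sum_(i <- r) f i x).
  by apply/funext => x; rewrite big_cons.
by rewrite big_cons; apply: cvgD => //; exact: H.
Qed.

Lemma cvg_bprod (I : Type) (r : seq I) (f : I -> T -> R) (l : I -> R) :
  (forall i, f i x @[x --> F] --> l i) ->
  (\prod_(i <- r) f i x) @[x --> F] --> \prod_(i <- r) l i.
Proof.
move=> H; elim: r => [|a r IH].
  have -> : (fun x => \prod_(i <- [::]) f i x) = fun=> 1 by apply/funext => x; rewrite big_nil.
  by rewrite big_nil; exact: cvg_cst.
have -> : (fun x => \prod_(i <- a :: r) f i x) = (fun x => f a x * \prod_(i <- r) f i x).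
  by apply/funext => x; rewrite big_cons.
by rewrite big_cons; apply: cvgM => //; exact: H.
Qed.

Lemma cvg_pow (g : T -> R) (l : R) n : g x @[x --> F] --> l -> (g x ^+ n) @[x --> F] --> l ^+ n.
Proof.
move=> H; elim: n => [|n IH].
  have -> : (fun x => g x ^+ 0) = fun=> 1 by apply/funext => x; rewrite expr0.
  by rewrite expr0; exact: cvg_cst.
have -> : (fun x => g x ^+ n.+1) = (fun x => g x * g x ^+ n).
  by apply/funext => x; rewrite exprS.
by rewrite exprS; apply: cvgM.
Qed.

Lemma peval_cvg N (p : rpoly R N) (V : T -> 'I_N -> R) v :
  (forall j, V x j @[x --> F] --> v j) ->
  peval p (V x) @[x --> F] --> peval p v.
Proof.
move=> H; rewrite /peval mpoly.mevalE.
have -> : (fun x => mpoly.meval (V x) p) =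
   (fun x => \sum_(m <- mpoly.msupp p) mpoly.mcoeff m p * \prod_i V x i ^+ mpoly.fun_of_multinom m i).
  by apply/funext => x; rewrite mpoly.mevalE.
apply: cvg_bsum => m; apply: cvgM; first exact: cvg_cst.
by apply: cvg_bprod => i; apply: cvg_pow.
Qed.

End cvg_big.

Lemma lim_norm_le (u : nat -> R) l B :
  u n @[n --> \oo] --> l -> (forall n, `|u n| <= B) -> `|l| <= B.
Proof.
move=> Hu HB; apply/ler_addgt0Pr => e e0.
have [N _ HN] := @cvgr_dist_lt _ _ _ _ _ _ _ Hu _ e0.
have := HN N (leqnn N) => /= /ltW Hl.
rewrite -(subrK (u N) l) (le_trans (ler_normD _ _)) // addrC lerD //.
Qed.

Lemma analytic_bound k (f : 'rV[R]_k -> R) a : analytic_at f a ->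
  exists rho, 0 < rho /\ exists B, forall y, `|y - a| < rho -> `|f y| <= B.
Proof.
move=> [c [r [r0 H]]].
have r20 : 0 < r / 2 by rewrite divr_gt0.
pose ys := a + (r / 2) *: const_mx 1.
have ysa : ys - a = (r / 2) *: const_mx 1 by rewrite /ys addrAC subrr add0r.
have ysr : `|ys - a| < r.
  rewrite ysa; apply: le_lt_trans (_ : r / 2 < r); last by rewrite ltr_pdivrMr // ltr_pMr // ltr1n.
  apply: mxnorm_le; first exact: ltW.
  by move=> i j; rewrite !mxE mulr1 gtr0_norm.
have [M [_ HM]] := cvg_seq_bounded (H ys ysr).1.
exists (r / 2); split => //; exists (M + 1) => y ya.
have ya' : `|y - a| < r by apply: lt_trans ya _; rewrite ltr_pdivrMr // ltr_pMr // ltr1n.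
apply: lim_norm_le (H y ya').2 _ => N.
have HMN := HM (M + 1) ltac:(by rewrite ltrDl) N I.
apply: le_trans HMN; rewrite /pseries_partial /= [leRHS]ger0_norm; last first.
  by apply: sumr_ge0 => al _; apply: mulr_ge0 => //; apply: prodr_ge0 => i _; exact: exprn_ge0.
apply: le_trans (ler_norm_sum _ _ _) _; apply: ler_sum => al _.
rewrite normrM normr_prod; apply: ler_wpM2l => //; apply: ler_prod => i _.
rewrite normrX exprn_ge0 //=; apply: lerXn2r; rewrite ?nnegrE //.
have -> : ys 0 i - a 0 i = r / 2 by have := congr1 (fun M : 'rV[R]_k => M 0 i) ysa; rewrite /= !mxE mulr1.
rewrite (gtr0_norm r20).
apply: le_trans (ltW ya).
by have := mxnorm_entry (y - a) 0 i; rewrite !mxE.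
Qed.


Lemma near_ball k (a : 'rV[R]_k) (P : 'rV[R]_k -> Prop) :
  (\forall z \near a, P z) -> exists d, 0 < d /\ forall z, `|z - a| < d -> P z.
Proof.
move=> /nbhs_ballP[d d0 Hd]; exists d; split => // z za; apply: Hd.
by rewrite -ball_normE /= distrC.
Qed.

Lemma ball_near k (a : 'rV[R]_k) d : 0 < d -> \forall z \near a, `|z - a| < d.
Proof.
by move=> d0; apply/nbhs_ballP; exists d => // z; rewrite -ball_normE /= distrC.
Qed.

Lemma open_near k (H : set 'rV[R]_k) a : open H -> H a -> \forall z \near a, H z.
Proof. by move=> Ho Ha; exact: Ho. Qed.

Lemma norm_le_shift k (z a : 'rV[R]_k) : `|z| <= `|z - a| + `|a|.
Proof. by rewrite -{1}(subrK a z) ler_normD. Qed.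

Lemma chain_cont k r (H : set 'rV[R]_k) (hh : 'I_r -> 'rV[R]_k -> R) :
  noetherian_chain H hh -> forall j a, H a -> {for a, continuous (hh j)}.
Proof.
move=> [Ho [_ [Han Hder]]] j a Ha.
have [B HB] : exists B : 'I_r -> R, \forall z \near a, forall j', `|hh j' z| <= B j'.
  have : forall j', exists Bj : R, \forall z \near a, `|hh j' z| <= Bj.
    move=> j'; have [rho [rho0 [Bj HBj]]] := analytic_bound (Han j' a Ha).
    exists Bj; near=> z; apply: HBj; near: z; exact: ball_near.
  move=> /choice[B HB]; exists B.
  exact: (@filter_forall _ _ (fun j' z => `|hh j' z| <= B j') _ _ HB).
have [q Hq] := choice (fun i => Hder i j).
pose Bt := `|a| + 1 + \sum_j' `|B j'|.
have [C HC] := choice (fun i => peval_bound (q i) Bt).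
have Hn : \forall z \near a, H z /\ (forall j', `|hh j' z| <= B j') /\ `|z - a| < 1.
  near=> z; split; first by near: z; exact: open_near.
  split; first by near: z; exact: HB.
  by near: z; exact: ball_near.
have [d [d0 Hd]] := near_ball Hn.
have HD : forall z, `|z - a| < d -> forall i, `|'D_(evec R i) (hh j) z| <= `|C i|.
  move=> z za i; have [Hz [HBz z1]] := Hd z za.
  rewrite (Hq i z Hz).2; apply: le_trans (HC i _ _) (ler_norm _) => idx.
  have Bt0 : 0 <= \sum_j' `|B j'| by apply: sumr_ge0.
  rewrite /ext_point; case: (fintype.split idx) => [j0|j'].
    apply: le_trans (mxnorm_entry z 0 j0) _; apply: le_trans (norm_le_shift z a) _.
    by rewrite /Bt addrC -addrA lerD2l (le_trans (ltW z1)) // lerDl.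
  apply: le_trans (HBz j') _; apply: le_trans (ler_norm _) _.
  apply: le_trans (_ : `|B j'| <= \sum_j0 `|B j0|) _.
    by rewrite (bigD1 j') //= lerDl; apply: sumr_ge0.
  by rewrite /Bt lerDr addr_ge0.
pose K := \sum_i `|C i|.
have K0 : 0 <= K by apply: sumr_ge0.
apply/(@cvgrPdist_le _ _ _ _ (nbhs_filter a)) => eps eps0.
near=> z.
have za : `|z - a| < d by near: z; exact: ball_near.
have zK : `|z - a| * (K + 1) < eps.
  rewrite -ltr_pdivlMr ?ltr_wpDl //; near: z; apply: ball_near.
  by rewrite divr_gt0 // ltr_wpDl.
have [xi [Hxi E]] := @telescope_mvt _ (hh j) a z
  (fun w wa i => (Hq i w (Hd w (le_lt_trans wa za)).1).1).
rewrite -normrN opprB E.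
apply: le_trans (ler_norm_sum _ _ _) _.
apply: le_trans (_ : \sum_i `|z - a| * `|C i| <= _).
  apply: ler_sum => i _; rewrite normrM; apply: ler_pM => //.
    by have := mxnorm_entry (z - a) 0 i; rewrite !mxE.
  exact: HD (xi i) (le_lt_trans (Hxi i) za) i.
rewrite -mulr_sumr; apply: le_trans (ltW zK); apply: ler_wpM2l => //.
by rewrite lerDl.
Unshelve. all: by end_near.
Qed.


Lemma quotE (V : normedModType R) (f : R -> V) (t : R) :
  (fun s : R => s^-1 *: ((f \o shift t) (s *: (1 : R)) - f t)) =
  (fun s : R => s^-1 *: (f (s + t) - f t)).
Proof. by apply/funext => s /=; rewrite -[s%:A]/(s * 1) mulr1. Qed.

Lemma shift_cvg (t : R) : (s + t) @[s --> 0^'] --> t.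
Proof.
have H0 : (s + t) @[s --> (0:R)] --> 0 + t by apply: cvgD; [exact: cvg_id| exact: cvg_cst].
rewrite add0r in H0; apply: cvg_trans H0; apply: cvg_app; exact: cvg_within.
Qed.

Lemma comp_quot k (psi : R -> 'rV[R]_k) t i : derivable psi t 1 ->
  (s^-1 * (psi (s + t) 0 i - psi t 0 i)) @[s --> 0^'] --> ('D_1 psi t) 0 i.
Proof.
move=> dpsi; rewrite (derive_mx dpsi) mxE.
have := (derivable_mxP psi t 1).1 dpsi 0 i.
by rewrite /derivable /derive quotE.
Qed.

Lemma chain_rule k (H : set 'rV[R]_k) (h : 'rV[R]_k -> R)
    (g : 'I_k -> 'rV[R]_k -> R) (psi : R -> 'rV[R]_k) (t : R) :
  open H -> H (psi t) ->
  (forall z, H z -> forall i, derivable h z (evec R i) /\ 'D_(evec R i) h z = g i z) ->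
  (forall i, {for psi t, continuous (g i)}) ->
  derivable psi t 1 ->
  derivable (h \o psi) t 1 /\
  'D_1 (h \o psi) t = \sum_i ('D_1 psi t) 0 i * g i (psi t).
Proof.
move=> Ho Ht Hg gc dpsi.
have [rho [rho0 Hrho]] := near_ball (open_near Ho Ht).
set y := psi t.
have ex : forall s : R, exists xi : 'I_k -> 'rV[R]_k, `|psi (s + t) - y| < rho ->
    (forall i, `|xi i - y| <= `|psi (s + t) - y|) /\
    h (psi (s + t)) - h y = \sum_i (psi (s + t) 0 i - y 0 i) * 'D_(evec R i) h (xi i).
  move=> s; have [lt|ge] := ltP (`|psi (s + t) - y|) rho.
    have [xi Hxi] := @telescope_mvt _ h y (psi (s + t))
      (fun z zy i => (Hg z (Hrho z (le_lt_trans zy lt)) i).1).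
    by exists xi => _.
  by exists (fun=> y).
have [Xi HXi] := choice ex.
have cpsi : psi (s + t) @[s --> 0^'] --> y.
  have cp : {for t, continuous psi}.
    by apply: differentiable_continuous; rewrite -derivable1_diffP.
  exact: (continuous_cvg _ cp (@shift_cvg t)).
have near_rho : \forall s \near 0^', `|psi (s + t) - y| < rho.
  exact: (@cvgr_distC_lt _ _ _ _ _ _ _ cpsi _ rho0).
have cXi : forall i, Xi s i @[s --> 0^'] --> y.
  move=> i; apply/cvgrPdist_lt => e e0; near=> s.
  rewrite distrC; apply: le_lt_trans ((HXi s _).1 i) _.
    by near: s; exact: near_rho.
  by near: s; exact: (@cvgr_distC_lt _ _ _ _ _ _ _ cpsi _ e0).
set L := \sum_i ('D_1 psi t) 0 i * g i y.
have QL : (s^-1 *: (h (psi (s + t)) - h y)) @[s --> 0^'] --> L.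
  have E : {near 0^', (fun s => \sum_(i <- index_enum 'I_k)
              (s^-1 * (psi (s + t) 0 i - y 0 i)) * g i (Xi s i)) =1
              (fun s => s^-1 *: (h (psi (s + t)) - h y))}.
    near=> s.
    have sr : `|psi (s + t) - y| < rho by near: s; exact: near_rho.
    have [Hx E] := HXi s sr.
    rewrite /= E /GRing.scale /= mulr_sumr; apply: eq_bigr => i _.
    rewrite mulrA; congr (_ * _).
    apply/esym; apply: (Hg _ _ i).2; apply: Hrho.
    exact: le_lt_trans (Hx i) sr.
  apply: cvg_trans (near_eq_cvg E) _.
  apply: cvg_bsum => i; apply: cvgM; first exact: comp_quot.
  exact: (continuous_cvg _ (gc i) (cXi i)).
split.
  by rewrite /derivable quotE; apply/cvg_ex; exists L.
by rewrite /derive quotE; apply: cvg_lim.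
Unshelve. all: by end_near.
Qed.


Definition subst_poly N M (s : 'I_N -> rpoly R M) (p : rpoly R N) : rpoly R M :=
  mpoly.comp_mpoly [tuple s i | i < N] p.

Lemma subst_polyE N M (s : 'I_N -> rpoly R M) (p : rpoly R N) v :
  peval (subst_poly s p) v = peval p (fun i => peval (s i) v).
Proof.
rewrite /peval /subst_poly mpoly.comp_mpoly_meval.
by apply: mpoly.meval_eq => i; rewrite tnth_mktuple.
Qed.

Definition var M (i : 'I_M) : rpoly R M := mpoly.mpolyX R (mpoly.mnm1 i).

Lemma varE M (i : 'I_M) v : peval (var i) v = v i.
Proof. exact: mpoly.mevalXU. Qed.

Lemma peval_sum M (I : Type) (r : seq I) (P : I -> mpoly.mpoly M R) v :
  peval (\sum_(i <- r) P i) v = \sum_(i <- r) peval (P i) v.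
Proof. by rewrite /peval (big_morph _ (mpoly.mevalD v) (mpoly.meval0 v)). Qed.

Lemma pevalM M (p q : mpoly.mpoly M R) v : peval (p * q) v = peval p v * peval q v.
Proof. exact: mpoly.mevalM. Qed.

Lemma entry_cont k (y : 'rV[R]_k) i : {for y, continuous (fun z : 'rV[R]_k => z 0 i)}.
Proof.
apply/(@cvgrPdist_le _ _ _ _ (nbhs_filter y)) => e e0; near=> z.
apply: le_trans (_ : `|y - z| <= e).
  by have := mxnorm_entry (y - z) 0 i; rewrite !mxE.
rewrite distrC; apply: ltW; near: z; exact: ball_near.
Unshelve. all: by end_near.
Qed.

Lemma split_lshift m n (i : 'I_m) : fintype.split (lshift n i) = inl i.
Proof. exact: (unsplitK (inl i)). Qed.

Lemma split_rshift m n (i : 'I_n) : fintype.split (rshift m i) = inr i.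
Proof. exact: (unsplitK (inr i)). Qed.


Section Construction.
Variables (m : nat) (D : set 'rV[R]_m) (F : 'rV[R]_m -> 'rV[R]_m).
Variables (alpha beta : \bar R) (psi : R -> 'rV[R]_m).
Variable rr : 'I_m -> nat.
Variable hh : forall l, 'I_(rr l) -> 'rV[R]_m -> R.
Variable pp : forall l, rpoly R (m + rr l).
Variable qq : forall l, 'I_m -> 'I_(rr l) -> rpoly R (m + rr l).
Arguments hh : clear implicits.
Arguments qq : clear implicits.
Hypothesis Dopen : open D.
Hypothesis Hchain : forall l, noetherian_chain D (hh l).
Hypothesis Hq : forall l i j y, D y ->
  derivable (hh l j) y (evec R i) /\
  'D_(evec R i) (hh l j) y = peval (qq l i j) (ext_point (hh l) y).
Hypothesis Hp : forall l y, D y -> F y 0 l = peval (pp l) (ext_point (hh l) y).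
Hypothesis Hsol : ivp_solution D F (psi 0) alpha beta psi.

Let TT := {l : 'I_m & 'I_(rr l)}.
Let S := #|{: TT}|.
Let MM := (m + S)%N.

Definition Xof (x : 'rV[R]_m) : 'rV[R]_MM :=
  \row_k match fintype.split k with
         | inl i => x 0 i
         | inr e => hh (tag (enum_val e)) (tagged (enum_val e)) x
         end.

Definition lq (l : 'I_m) (j : 'I_(m + rr l)) : rpoly R MM :=
  match fintype.split j with
  | inl i => var (lshift S i)
  | inr j' => var (rshift m (enum_rank (existT (fun l => 'I_(rr l)) l j' : TT)))
  end.

Lemma lqE (l : 'I_m) (x : 'rV[R]_m) (j : 'I_(m + rr l)) :
  peval (@lq l j) (fun k => Xof x 0 k) = ext_point (hh l) x j.
Proof.
rewrite /lq /ext_point; case: (fintype.split j) => [i|j']; rewrite varE mxE.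
  by rewrite split_lshift.
by rewrite split_rshift enum_rankK.
Qed.

Definition PN (k : 'I_MM) : mpoly.mpoly MM R :=
  match fintype.split k with
  | inl l => subst_poly (@lq l) (pp l)
  | inr e => \sum_(i < m) subst_poly (@lq (tag (enum_val e)))
                 (qq (tag (enum_val e)) i (tagged (enum_val e))) *
               subst_poly (@lq i) (pp i)
  end.

Definition FN (X : 'rV[R]_MM) : 'rV[R]_MM := \row_k peval (PN k) (fun k' => X 0 k').

Definition psiN s := Xof (psi s).

Lemma psiN_comp t : (alpha < t%:E < beta)%E -> forall k,
  derivable (fun s => psiN s 0 k) t 1 /\
  'D_1 (fun s => psiN s 0 k) t = FN (psiN t) 0 k.
Proof.
move=> tin k; have [Dt [dpsi Fpsi]] := Hsol.2 t tin.
rewrite [FN _ 0 k]mxE.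
have -> : (fun s => psiN s 0 k) = (fun s => match fintype.split k with
         | inl i => psi s 0 i
         | inr e => hh (tag (enum_val e)) (tagged (enum_val e)) (psi s)
         end) by apply/funext => s; rewrite mxE.
rewrite /PN; case: (fintype.split k) => [l|e].
  split; first exact: (derivable_mxP psi t 1).1 dpsi 0 l.
  rewrite subst_polyE.
  have -> : (fun i => peval (@lq l i) (fun k' => psiN t 0 k')) = ext_point (hh l) (psi t).
    by apply/funext => j; rewrite lqE.
  by rewrite -Hp // -Fpsi derive1E (derive_mx dpsi) mxE.
set w := enum_val e; set l := tag w; set j := tagged w.
have gc : forall i, {for psi t, continuous
    (fun z => peval (qq l i j) (ext_point (hh l) z))}.
  move=> i; apply: (peval_cvg (F := nbhs (psi t))) => idx.
  rewrite /ext_point; case: (fintype.split idx) => [j0|j'].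
    exact: entry_cont.
  exact: (chain_cont (Hchain l)).
have [Hd HD] := @chain_rule _ D (hh l j)
   (fun i z => peval (qq l i j) (ext_point (hh l) z)) psi t Dopen Dt
   (fun z Hz i => Hq i j Hz) gc dpsi.
split; first exact: Hd.
rewrite HD peval_sum; apply: eq_bigr => i _.
rewrite pevalM !subst_polyE.
have -> : (fun i0 => peval (@lq l i0) (fun k' => psiN t 0 k')) = ext_point (hh l) (psi t).
  by apply/funext => j0; rewrite lqE.
have -> : (fun i0 => peval (@lq i i0) (fun k' => psiN t 0 k')) = ext_point (hh i) (psi t).
  by apply/funext => j0; rewrite lqE.
by rewrite -Hp // -Fpsi derive1E mulrC.
Qed.

Lemma poly_of_noeth n (phi : R -> 'rV[R]_n) (hnm : (n <= m)%N) :
  (forall t, (alpha < t%:E < beta)%E -> forall i, psi t 0 (widen_ord hnm i) = phi t 0 i) ->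
  coord_proj_of (@polynomial_ivp R) alpha beta phi.
Proof.
move=> Hproj.
have hnM : (n <= MM)%N by rewrite (leq_trans hnm) // leq_addr.
exists MM, hnM, setT, FN, (psiN 0), psiN.
split; first by split => // k; exists (PN k) => x; rewrite mxE.
split.
  split => // t tin; split => //.
  have dN : derivable psiN t 1.
    by apply/derivable_mxP => i j; rewrite (ord1 i); exact: (psiN_comp tin j).1.
  split => //.
  rewrite derive1E (derive_mx dN); apply/matrixP => i j; rewrite (ord1 i) [LHS]mxE.
  exact: (psiN_comp tin j).2.
move=> t tin i; rewrite -Hproj // /psiN /Xof mxE.
have -> : widen_ord hnM i = lshift S (widen_ord hnm i) by apply: val_inj.
by rewrite split_lshift.
Qed.

End Construction.

End Aux.

Lemma connected_rV (R : realType) k : connected (setT : set 'rV[R]_k).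
Proof.
have -> : [set: 'rV[R]_k] = \bigcup_(z in setT) ((fun s : R => s *: z) @` `[0, 1]).
  apply/seteqP; split => // z _; exists z => //; exists 1; last by rewrite scale1r.
  by rewrite /= in_itv /= ler01 lexx.
apply: bigcup_connected.
  exists 0 => z _; exists 0; last by rewrite scale0r.
  by rewrite /= in_itv /= ler01 lexx.
move=> z _; apply: connected_continuous_connected; first exact: segment_connected.
apply: continuous_subspaceT => s; exact: scalel_continuous.
Qed.

Lemma noeth_of_poly (R : realType) n (alpha beta : \bar R) (phi : R -> 'rV[R]_n) :
  coord_proj_of (@polynomial_ivp R) alpha beta phi ->
  coord_proj_of (@noetherian_ivp R) alpha beta phi.
Proof.
move=> [m [hnm [D [F [X0 [psi [[HD HF] [Hsol Hproj]]]]]]]].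
exists m, hnm, D, F, X0, psi; split; last by split.
rewrite HD; split; first exact: openT.
split; first exact: connected_rV.
split => // l.
have [p Hp] := HF l.
exists 0%N, (fun _ _ => 0),
  (subst_poly (fun i : 'I_m => var R (lshift 0 i)) p).
split.
  split; first exact: openT.
  split; first exact: connected_rV.
  by split; [case | move=> ? []].
move=> y _; rewrite Hp subst_polyE; apply: mpoly.meval_eq => i.
by rewrite varE /ext_point split_lshift.
Qed.

Theorem proposition7p4 (R : realType) (n : nat) (alpha beta : \bar R)
  (phi : R -> 'rV[R]_n) :
  (alpha < 0%:E)%E -> (0%:E < beta)%E ->
  (coord_proj_of (@noetherian_ivp R) alpha beta phi <->
   coord_proj_of (@polynomial_ivp R) alpha beta phi).
Proof.
move=> _ _; split; last exact: noeth_of_poly.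
move=> [m [hnm [D [F [X0 [psi [[Dopen [Dconn [DX0 HF]]] [[psi0 Hsol] Hproj]]]]]]]].
have HF' : forall l : 'I_m, exists w : {r : nat & (('I_r -> 'rV[R]_m -> R) * rpoly R (m + r))%type},
    noetherian_chain D (projT2 w).1 /\
    forall y, D y -> F y 0 l = peval (projT2 w).2 (ext_point (projT2 w).1 y).
  by move=> l; have [r [h [p [Hc He]]]] := HF l; exists (existT _ r (h, p)).
pose W l := sval (cid (HF' l)).
pose rr l := projT1 (W l).
pose hh l : 'I_(rr l) -> 'rV[R]_m -> R := (projT2 (W l)).1.
pose pp l : rpoly R (m + rr l) := (projT2 (W l)).2.
have HW : forall l, noetherian_chain D (hh l) /\
    forall y, D y -> F y 0 l = peval (pp l) (ext_point (hh l) y).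
  by move=> l; exact: (svalP (cid (HF' l))).
have Hq' : forall l i (j : 'I_(rr l)), exists q : rpoly R (m + rr l),
    forall y, D y -> derivable (hh l j) y (evec R i) /\
      'D_(evec R i) (hh l j) y = peval q (ext_point (hh l) y).
  by move=> l i j; have [_ [_ [_ H]]] := (HW l).1; exact: H.
pose qq l i j := sval (cid (Hq' l i j)).
apply: (@poly_of_noeth R m D F alpha beta psi rr hh pp qq Dopen _ _ _ _ n phi hnm Hproj).
- by move=> l; exact: (HW l).1.
- by move=> l i j y Dy; exact: (svalP (cid (Hq' l i j))) y Dy.
- by move=> l y Dy; exact: (HW l).2 y Dy.
- by split.
Qed.
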